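(* The category $\mathbf{Top}^{\mathrm{op}}$ (the opposite of the category of topological spaces and continuous maps) has finite 2-fold subobject decompositions.
   Context: $\mathbf{Top}^{\mathrm{op}}$ is regular (equivalently $\mathbf{Top}$ is coregular; regular monomorphisms in $\mathbf{Top}$ are embeddings). In a regular category, the image of a subobject under a morphism is given by regular epi–mono factorization. A regular category has finite 2-fold subobject decompositions if for every positive integer $n$, all objects $A_1,\dots,A_n$ and all subobjects $S,T$ of $A_1\times\cdots\times A_n$: if for all $i,j\in\{1,\dots,n\}$ the images of $S$ and $T$ under $(\pi_i,\pi_j):A_1\times\cdots\times A_n\to A_i\times A_j$ coincide, then $S=T$. Dually in $\mathbf{Top}$: for finite coproducts $\bigsqcup_{i}X_i$, any two epimorphisms out of $\bigsqcup_i X_i$ whose (regular-mono part of the) coimage factorizations restricted to each $X_i\sqcup X_j$ agree up to isomorphism are isomorphic under $\bigsqcup_i X_i$. *)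

(* Defs.v *)
From HB Require Import structures.
From mathcomp Require Import all_boot all_order.
From mathcomp Require Import boolp classical_sets topology.

Set Implicit Arguments.
Unset Strict Implicit.
Unset Printing Implicit Defensive.

Record category := Category {
  ob :> Type;
  hom : ob -> ob -> Type;
  idm : forall A, hom A A;
  comp : forall A B C, hom B C -> hom A B -> hom A C;
  comp_idl : forall A B (f : hom A B), comp (idm B) f = f;
  comp_idr : forall A B (f : hom A B), comp f (idm A) = f;
  comp_assoc : forall A B C D (h : hom C D) (g : hom B C) (f : hom A B),
      comp h (comp g f) = comp (comp h g) f }.

Arguments idm {c} A.
Arguments comp {c A B C}.

Definition op (C : category) : category :=
  @Category (ob C) (fun A B => hom B A) (fun A => idm A)
    (fun A B C0 g f => comp f g)
    (fun A B f => comp_idr f) (fun A B f => comp_idl f)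
    (fun A B C0 D h g f => esym (comp_assoc f g h)).

Section CatNotions.
Variable C : category.

Definition mono (A B : C) (m : hom A B) : Prop :=
  forall Z (g h : hom Z A), comp m g = comp m h -> g = h.

Definition iso (A B : C) (f : hom A B) : Prop :=
  exists g : hom B A, comp g f = idm A /\ comp f g = idm B.

Definition regular_epi (A B : C) (q : hom A B) : Prop :=
  exists (Z : C) (f g : hom Z A), comp q f = comp q g /\
    forall (W : C) (h : hom A W), comp h f = comp h g ->
      exists! k : hom B W, comp k q = h.

Record subobject (A : C) := Subobject {
  sub_ob : C;
  sub_mono : hom sub_ob A;
  sub_monoP : mono sub_mono }.

Definition same_subobject (A : C) (S T : subobject A) : Prop :=
  exists i : hom (sub_ob S) (sub_ob T),
    iso i /\ comp (sub_mono T) i = sub_mono S.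

(* I is (a representative of) the image of the subobject S under f,
   given by the regular epi - mono factorization of f o m_S. *)
Definition is_image (A B : C) (f : hom A B) (S : subobject A)
    (I : subobject B) : Prop :=
  exists q : hom (sub_ob S) (sub_ob I),
    regular_epi q /\ comp (sub_mono I) q = comp f (sub_mono S).

Definition images_coincide (A B : C) (f : hom A B) (S T : subobject A) : Prop :=
  exists I J : subobject B, is_image f S I /\ is_image f T J /\
    same_subobject I J.

Record product (I : Type) (A : I -> C) := Product {
  prod_ob : C;
  proj : forall i, hom prod_ob (A i);
  tuple : forall X : C, (forall i, hom X (A i)) -> hom X prod_ob;
  proj_tuple : forall X (f : forall i, hom X (A i)) i,
      comp (proj i) (tuple f) = f i;
  tuple_uniq : forall X (h : hom X prod_ob) (f : forall i, hom X (A i)),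
      (forall i, comp (proj i) h = f i) -> h = tuple f }.

Record binproduct (A1 A2 : C) := BinProduct {
  bprod_ob : C;
  bproj1 : hom bprod_ob A1;
  bproj2 : hom bprod_ob A2;
  bpair : forall X : C, hom X A1 -> hom X A2 -> hom X bprod_ob;
  bproj1_pair : forall X (f : hom X A1) (g : hom X A2),
      comp bproj1 (bpair f g) = f;
  bproj2_pair : forall X (f : hom X A1) (g : hom X A2),
      comp bproj2 (bpair f g) = g;
  bpair_uniq : forall X (h : hom X bprod_ob) (f : hom X A1) (g : hom X A2),
      comp bproj1 h = f -> comp bproj2 h = g -> h = bpair f g }.

Definition has_finite_2fold_subobject_decompositions : Prop :=
  forall (n : nat), 0 < n ->
  forall (A : 'I_n -> C) (P : product A)
         (Q : forall i j : 'I_n, binproduct (A i) (A j))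
         (S T : subobject (prod_ob P)),
    (forall i j : 'I_n,
        images_coincide (bpair (Q i j) (proj P i) (proj P j)) S T) ->
    same_subobject S T.

End CatNotions.

Record ctsmap (X Y : topologicalType) := CtsMap {
  ctsfun :> X -> Y;
  ctsfunP : continuous ctsfun }.

Lemma ctsmap_eq (X Y : topologicalType) (f g : ctsmap X Y) :
  ctsfun f = ctsfun g -> f = g.
Proof.
case: f g => f fP [g gP] /= efg; subst g.
by rewrite (Prop_irrelevance fP gP).
Qed.

Definition cts_id (X : topologicalType) : ctsmap X X :=
  @CtsMap X X id (fun x => cvg_id).

Definition cts_comp (X Y Z : topologicalType) (g : ctsmap Y Z)
  (f : ctsmap X Y) : ctsmap X Z :=
  @CtsMap X Z (g \o f)
    (fun x => @continuous_comp X Y Z f g x (@ctsfunP _ _ f x) (@ctsfunP _ _ g (f x))).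

Definition Top : category :=
  @Category topologicalType ctsmap cts_id cts_comp
    (fun A B f => @ctsmap_eq _ _ (cts_comp (cts_id B) f) f erefl)
    (fun A B f => @ctsmap_eq _ _ (cts_comp f (cts_id A)) f erefl)
    (fun A B C D h g f => @ctsmap_eq _ _ (cts_comp h (cts_comp g f)) (cts_comp (cts_comp h g) f) erefl).

(* Main.v *)
Require Import Defs.
From mathcomp Require Import all_boot topology.
From mathcomp Require Import boolp classical_sets.
Set Implicit Arguments.
Unset Strict Implicit.
Unset Printing Implicit Defensive.
Local Open Scope classical_set_scope.

Lemma images_coincide_sym (C : category) (A B : C) (f : hom A B)
  (S T : subobject A) : images_coincide f S T -> images_coincide f T S.
Proof.
move=> [I [J [hI [hJ [i [[g [e1 e2]] e3]]]]]].
exists J, I; split=> //; split=> //; exists g; split.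
  by exists i; split.
by rewrite -e3 -comp_assoc e2 comp_idr.
Qed.

Section Indisc.
Variable (Y : topologicalType) (y : Y).
Definition indisc := initial_topology (fun _ : bool => y).
Lemma indisc_cont (X : topologicalType) (f : X -> indisc) : continuous f.
Proof.
apply/continuousP => A [B oB <-].
have [By|nBy] := pselect (B y).
  have -> : f @^-1` ((fun _ : bool => y) @^-1` B) = setT.
    by rewrite predeqE => x; split.
  exact: openT.
have -> : f @^-1` ((fun _ : bool => y) @^-1` B) = set0.
  by rewrite predeqE => x; split.
exact: open0.
Qed.
End Indisc.

Lemma epi_surj (X Y : topologicalType) (S : ctsmap X Y) :
  @mono (op Top) Y X S -> forall y, exists x, S x = y.
Proof.
move=> mS y.
pose g : ctsmap Y (indisc y) :=
  @CtsMap Y (indisc y) (fun y' => `[< exists x, S x = y' >]) (@indisc_cont _ y _ _).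
pose h : ctsmap Y (indisc y) :=
  @CtsMap Y (indisc y) (fun _ => true) (@indisc_cont _ y _ _).
have := mS (indisc y : Top) g h.
move=> /(_ _)/(congr1 (fun m : ctsmap Y (indisc y) => ctsfun m y)) /= H.
apply/asboolP; apply: H.
apply: ctsmap_eq => /=; apply: funext => x /=.
by apply/asboolP; exists x.
Qed.

Lemma coprod_cover (I : Type) (A : I -> Top) (P : @product (op Top) I A)
  (p : prod_ob P) : exists i (a : A i), (proj P i : ctsmap (A i) (prod_ob P)) a = p.
Proof.
pose Z : Top := indisc p.
pose g : ctsmap (prod_ob P) (indisc p) :=
  @CtsMap _ (indisc p) (fun q => `[< exists i (a : A i), (proj P i : ctsmap (A i) (prod_ob P)) a = q >]) (@indisc_cont _ p _ _).
pose h : ctsmap (prod_ob P) (indisc p) :=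
  @CtsMap _ (indisc p) (fun _ => true) (@indisc_cont _ p _ _).
have e1 := @tuple_uniq _ _ _ P Z g (fun i => @Defs.comp (op Top) _ _ _ (proj P i) g) (fun i => erefl).
have e2 := @tuple_uniq _ _ _ P Z h (fun i => @Defs.comp (op Top) _ _ _ (proj P i) g).
have e3 : h = g.
  rewrite e1; apply: e2 => i.
  apply: ctsmap_eq; apply: funext => a /=.
  by symmetry; apply/asboolP; exists i, a.
have := congr1 (fun m : ctsmap (prod_ob P) (indisc p) => ctsfun m p) e3 => /= H.
by apply/asboolP; rewrite -H.
Qed.

Lemma regmono_inj (X Y : topologicalType) (q : ctsmap X Y) :
  @regular_epi (op Top) Y X q -> injective q.
Proof.
move=> [Z [f [g [efg univ]]]] a b qab.
have eh : forall x, f (q x) = g (q x).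
  by move=> x; have := congr1 (fun m : ctsmap X Z => ctsfun m x) efg.
pose h : ctsmap X Y := @CtsMap X Y (fun _ => q a) (@cst_continuous _ _ _).
have hh : @Defs.comp (op Top) Z Y X h f = @Defs.comp (op Top) Z Y X h g.
  by apply: ctsmap_eq; apply: funext => x /=; apply: eh.
have [k [_ uk]] := univ X h hh.
pose ka : ctsmap X X := @CtsMap X X (fun _ => a) (@cst_continuous _ _ _).
pose kb : ctsmap X X := @CtsMap X X (fun _ => b) (@cst_continuous _ _ _).
have ea : k = ka.
  by apply: uk; apply: ctsmap_eq; apply: funext => x.
have eb : k = kb.
  by apply: uk; apply: ctsmap_eq; apply: funext => x /=.
have := congr1 (fun m : ctsmap X X => ctsfun m a) (etrans (esym ea) eb).
by [].
Qed.

Lemma regmono_emb (X Y : topologicalType) (q : ctsmap X Y) :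
  @regular_epi (op Top) Y X q -> forall O : set X, open O ->
  exists W : set Y, open W /\ O = q @^-1` W.
Proof.
move=> rq; have qinj := regmono_inj rq.
move: rq => [Z [f [g [efg univ]]]] O oO.
have eh : forall x, f (q x) = g (q x).
  by move=> x; have := congr1 (fun m : ctsmap X Z => ctsfun m x) efg.
pose W' : Top := initial_topology (q : X -> Y).
pose h : ctsmap W' Y := @CtsMap W' Y (q : W' -> Y) (@initial_continuous _ _ _).
have hh : @Defs.comp (op Top) Z Y W' h f = @Defs.comp (op Top) Z Y W' h g.
  by apply: ctsmap_eq; apply: funext => x /=; apply: eh.
have [k [ek _]] := univ W' h hh.
have kid : forall x, k x = x.
  by move=> x; apply: qinj; have := congr1 (fun m : ctsmap W' Y => ctsfun m x) ek.
have := (continuousP _).1 (@ctsfunP W' X k) O oO.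
move=> [B oB eB]; exists B; split=> //.
rewrite eB; rewrite predeqE => x /=; by rewrite kid.
Qed.

Lemma pair_facts (X Pt : Top) (f : @hom (op Top) Pt X)
  (S T : @subobject (op Top) Pt) :
  @images_coincide (op Top) Pt X f S T ->
  (forall x y : X, (sub_mono S : ctsmap Pt (sub_ob S)) ((f : ctsmap X Pt) x)
                   = (sub_mono S : ctsmap Pt (sub_ob S)) ((f : ctsmap X Pt) y) ->
     (sub_mono T : ctsmap Pt (sub_ob T)) ((f : ctsmap X Pt) x)
     = (sub_mono T : ctsmap Pt (sub_ob T)) ((f : ctsmap X Pt) y)) /\
  (forall U : set (sub_ob T), open U -> exists W : set (sub_ob S), open W /\
     forall x : X, W ((sub_mono S : ctsmap Pt (sub_ob S)) ((f : ctsmap X Pt) x))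
       <-> U ((sub_mono T : ctsmap Pt (sub_ob T)) ((f : ctsmap X Pt) x))).
Proof.
move=> [I [J [[qI [rI eI]] [[qJ [rJ eJ]] [psi [[psi' [e1 e2]] e3]]]]]].
have qIinj := regmono_inj rI.
have eI' : forall x, (qI : ctsmap _ _) ((sub_mono I : ctsmap _ _) x)
   = (sub_mono S : ctsmap _ _) ((f : ctsmap X Pt) x).
  by move=> x; have := congr1 (fun m : ctsmap X (sub_ob S) => ctsfun m x) eI.
have eJ' : forall x, (qJ : ctsmap _ _) ((sub_mono J : ctsmap _ _) x)
   = (sub_mono T : ctsmap _ _) ((f : ctsmap X Pt) x).
  by move=> x; have := congr1 (fun m : ctsmap X (sub_ob T) => ctsfun m x) eJ.
have e3' : forall x, (psi : ctsmap _ _) ((sub_mono J : ctsmap _ _) x)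
   = (sub_mono I : ctsmap _ _) x.
  by move=> x; have := congr1 (fun m : ctsmap X (sub_ob I) => ctsfun m x) e3.
have e2' : forall z, (psi' : ctsmap _ _) ((psi : ctsmap _ _) z) = z.
  by move=> z; have := congr1 (fun m : ctsmap (sub_ob J) (sub_ob J) => ctsfun m z) e2.
have mJ : forall x, (sub_mono J : ctsmap _ _) x
   = (psi' : ctsmap _ _) ((sub_mono I : ctsmap _ _) x).
  by move=> x; rewrite -e3' e2'.
split.
  move=> x y; rewrite -!eI' -!eJ' !mJ => /qIinj ->; done.
move=> U oU.
have oO : open ((fun z => (qJ : ctsmap _ _) ((psi' : ctsmap _ _) z)) @^-1` U).
  apply: ((continuousP _).1 _ U oU).
  exact: (@ctsfunP _ _ (cts_comp (qJ : ctsmap _ _) (psi' : ctsmap _ _))).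
have [W [oW eW]] := regmono_emb rI oO.
exists W; split => // x.
rewrite -eI' -eJ' mJ.
have := congr1 (fun A => A ((sub_mono I : ctsmap _ _) x)) eW => /= <-.
by [].
Qed.

Lemma open_forall_ord n (T : topologicalType) (W : 'I_n -> set T) :
  (forall j, open (W j)) -> open (fun s => forall j, W j s).
Proof.
move=> oW.
suff H : forall k, open (fun s => forall j : 'I_n, (j < k)%N -> W j s).
  have := H n; congr open; rewrite predeqE => s; split.
    by move=> h j; apply: h.
  by move=> h j _; apply: h.
elim=> [|k IH].
  have -> : (fun s => forall j : 'I_n, (j < 0)%N -> W j s) = setT.
    by rewrite predeqE => s; split.
  exact: openT.
case: (ltnP k n) => kn.
  have -> : (fun s => forall j : 'I_n, (j < k.+1)%N -> W j s) =
     (fun s => forall j : 'I_n, (j < k)%N -> W j s) `&` W (Ordinal kn).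
    rewrite predeqE => s; split.
      move=> h; split; first by move=> j jk; apply: h; apply: ltnW.
      by apply: h.
    move=> [h1 h2] j; rewrite ltnS leq_eqVlt => /orP [/eqP ejk|jk]; last exact: h1.
    by have -> : j = Ordinal kn by apply: val_inj.
  by apply: openI.
have -> : (fun s => forall j : 'I_n, (j < k.+1)%N -> W j s) =
     (fun s => forall j : 'I_n, (j < k)%N -> W j s).
  rewrite predeqE => s; split.
    by move=> h j jk; apply: h; apply: ltnW.
  move=> h j _; apply: h; exact: (leq_trans (ltn_ord j) kn).
exact: IH.
Qed.

Lemma glue n (P0 S0 T0 : topologicalType) (S : P0 -> S0) (T : P0 -> T0)
  (C : 'I_n -> set P0)
  (Ssurj : forall s, exists x, S x = s) (cover : forall p, exists i, C i p)
  (H1 : forall i j x y, (C i x \/ C j x) -> (C i y \/ C j y) ->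
          S x = S y -> T x = T y)
  (H2 : forall i j (U : set T0), open U -> exists W : set S0, open W /\
          forall x, (C i x \/ C j x) -> (W (S x) <-> U (T x))) :
  exists Phi : S0 -> T0, continuous Phi /\ forall x, Phi (S x) = T x.
Proof.
pose ch s := projT1 (cid (Ssurj s)).
have chP : forall s, S (ch s) = s by move=> s; exact: (projT2 (cid (Ssurj s))).
exists (fun s => T (ch s)); split; last first.
  move=> x; have [i Ci] := cover (ch (S x)); have [k Ck] := cover x.
  by apply: (H1 i k); [left|right|rewrite chP].
apply/continuousP => U oU.
pose W i j := projT1 (cid (H2 i j U oU)).
have WP : forall i j, open (W i j) /\ forall x, (C i x \/ C j x) ->
    (W i j (S x) <-> U (T x)) by move=> i j; exact: (projT2 (cid (H2 i j U oU))).
have -> : (fun s => T (ch s)) @^-1` U =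
   \bigcup_(i in setT) (fun s => forall j, W i j s).
  rewrite predeqE => s; split.
    move=> /= Us; have [i Ci] := cover (ch s); exists i => // j.
    by rewrite -(chP s); apply/((WP i j).2 (ch s) (or_introl Ci)).
  move=> [i _ /= h]; have [k Ck] := cover (ch s).
  by apply/((WP i k).2 (ch s) (or_intror Ck)); rewrite chP; apply: h.
apply: bigcup_open => i _; apply: open_forall_ord => j; exact: (WP i j).1.
Qed.

Lemma one_dir n (A : 'I_n -> Top) (P : @product (op Top) 'I_n A)
  (Q : forall i j : 'I_n, @binproduct (op Top) (A i) (A j))
  (S T : @subobject (op Top) (prod_ob P)) :
  (forall i j : 'I_n,
     images_coincide (bpair (Q i j) (proj P i) (proj P j)) S T) ->
  exists Phi : ctsmap (sub_ob S) (sub_ob T), forall x,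
    Phi ((sub_mono S : ctsmap _ _) x) = (sub_mono T : ctsmap _ _) x.
Proof.
move=> H.
pose C i := fun p : prod_ob P => exists a, (proj P i : ctsmap _ _) a = p.
have inQ : forall i j x, C i x \/ C j x -> exists z,
    x = (bpair (Q i j) (proj P i) (proj P j) : ctsmap _ _) z.
  move=> i j x [[a <-]|[a <-]].
    exists ((bproj1 (Q i j) : ctsmap _ _) a).
    by have := congr1 (fun m : ctsmap (A i) (prod_ob P) => ctsfun m a)
      (bproj1_pair (Q i j) (proj P i) (proj P j)).
  exists ((bproj2 (Q i j) : ctsmap _ _) a).
  by have := congr1 (fun m : ctsmap (A j) (prod_ob P) => ctsfun m a)
      (bproj2_pair (Q i j) (proj P i) (proj P j)).
have H1 : forall i j x y, (C i x \/ C j x) -> (C i y \/ C j y) ->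
    (sub_mono S : ctsmap _ _) x = (sub_mono S : ctsmap _ _) y ->
    (sub_mono T : ctsmap _ _) x = (sub_mono T : ctsmap _ _) y.
  move=> i j x y /inQ [zx ->] /inQ [zy ->].
  exact: (pair_facts (H i j)).1.
have H2 : forall i j (U : set (sub_ob T)), open U ->
    exists W : set (sub_ob S), open W /\ forall x, (C i x \/ C j x) ->
    (W ((sub_mono S : ctsmap _ _) x) <-> U ((sub_mono T : ctsmap _ _) x)).
  move=> i j U oU.
  have [W [oW eW]] := (pair_facts (H i j)).2 U oU.
  by exists W; split => // x /inQ [z ->].
have [Phi [cPhi ePhi]] := @glue n (prod_ob P) (sub_ob S) (sub_ob T)
  (sub_mono S : ctsmap _ _) (sub_mono T : ctsmap _ _) C
  (epi_surj (@sub_monoP _ _ S)) (fun p => coprod_cover p) H1 H2.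
by exists (@CtsMap _ _ Phi cPhi).
Qed.

Theorem proposition4p12 :
  has_finite_2fold_subobject_decompositions (op Top).
Proof.
move=> n _ A P Q S T H.
have [Phi ePhi] := one_dir H.
have [Psi ePsi] := one_dir (fun i j => images_coincide_sym (H i j)).
have Ssurj := epi_surj (@sub_monoP _ _ S).
have Tsurj := epi_surj (@sub_monoP _ _ T).
exists Psi; split.
  exists Phi; split.
    apply: ctsmap_eq; apply: funext => s /=.
    by have [x <-] := Ssurj s; rewrite ePhi ePsi.
  apply: ctsmap_eq; apply: funext => s /=.
  by have [x <-] := Tsurj s; rewrite ePsi ePhi.
by apply: ctsmap_eq; apply: funext => x /=; rewrite ePsi.
Qed.
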